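(* The functions $\Psi$ (in the correlated setting) and $\Phi^{\ge\nu-1}$ are monotone and submodular set functions on their respective domains $V\times\{0\}$ and $\hat V$.
   Context: Triggering model: for a directed graph $G=(V,E)$ and $p:E\to[0,1]$, an outcome $X=(T_v)_{v\in V}$ is obtained by having each node $v$ independently choose a subset $T_v$ of its in-neighbours $N_v$, with $T_v=S$ with probability $\prod_{u\in S}p_{uv}\prod_{u\in N_v\setminus S}(1-p_{uv})$; $\rho_X(A)$ is the set of nodes reachable from $A\subseteq V$ via arcs $\{(u,v):u\in T_v\}$. $\mathrm{BAL}(\mu,\nu)$ for integer constants $\mu\ge\nu\ge2$: instance = directed graph $G=(V,E)$, probability functions $p_1,\dots,p_\mu:E\to[0,1]$, seed sets $\mathcal I=(I_1,\dots,I_\mu)$, budget $k\ge2$. Let $\hat V=V\times[\mu]$; $\mathcal S\subseteq\hat V$ is identified with $(S_1,\dots,S_\mu)$, $S_i=\{v:(v,i)\in\mathcal S\}$. An outcome profile $\mathcal X=(X_1,\dots,X_\mu)$ consists of outcomes $X_i$ w.r.t. $p_i$ (independent in the heterogeneous setting; in the correlated setting all $p_i$ coincide and $X_1=\dots=X_\mu=X$). Campaign $i$ reaches $v$ from seeds $A_i$ if $v\in\rho_{X_i}(A_i)$. $V^j_{\mathcal X}$ is the set of nodes reached by exactly $j$ campaigns from $\mathcal I$. $\Phi^{\ge\nu-1}(\mathcal S)$ is the expected number of nodes $v\notin\bigcup_{j<\nu-1}V^j_{\mathcal X}$ reached by none or by at least $\nu$ campaigns from $(I_i\cup S_i)_i$.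 In the correlated setting, for $\mathcal T\subseteq V\times\{0\}$ with node set $T$, $\Psi(\mathcal T)=\mathbb E\big[\big|(\rho_X(T)\cap\bigcup_{j=1}^{\nu-1}V^j_{\mathcal X})\cup\bigcup_{j=\nu}^\mu V^j_{\mathcal X}\big|\big]$. *)

(* Defs.v *)
From HB Require Import structures.
From mathcomp Require Import all_boot all_order all_algebra.
Set Implicit Arguments. Unset Strict Implicit. Unset Printing Implicit Defensive.
Import Order.TTheory GRing.Theory Num.Theory.
Local Open Scope ring_scope.

Section Triggering.
Variables (R : realFieldType) (V : finType).

(* An outcome X = (T_v)_v : each node v chooses a set T_v of nodes. *)
Definition outcome := {ffun V -> {set V}}.

(* E u v  means that (u,v) is an arc, i.e. u is an in-neighbour of v.
   Probability of outcome X w.r.t. p : prod_v prod_{u in N_v} (p_uv or 1-p_uv);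
   choosing a non-in-neighbour has probability 0. *)
Definition outcome_prob (E : rel V) (p : V -> V -> R) (X : outcome) : R :=
  \prod_(v : V) \prod_(u : V)
     (if E u v then (if u \in X v then p u v else 1 - p u v)
      else (if u \in X v then 0 else 1)).

(* rho_X(A): nodes reachable from A via the live arcs {(u,v) : u \in T_v}. *)
Definition rho (X : outcome) (A : {set V}) : {set V} :=
  [set v | [exists a in A, connect (fun u w => u \in X w) a v]].

Variable mu : nat.

Definition profile := {ffun 'I_mu -> outcome}.

Definition ncamp (XX : profile) (A : 'I_mu -> {set V}) (v : V) : nat :=
  #|[set i : 'I_mu | v \in rho (XX i) (A i)]|.

Definition Vj (XX : profile) (I : 'I_mu -> {set V}) (j : nat) : {set V} :=
  [set v | ncamp XX I v == j].

Definition slice (S : {set V * 'I_mu}) (i : 'I_mu) : {set V} :=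
  [set v | (v, i) \in S].

Definition seedU (I : 'I_mu -> {set V}) (S : {set V * 'I_mu}) (i : 'I_mu) :=
  I i :|: slice S i.

(* realisation of the quantity inside Phi^{>= nu-1} for a fixed profile *)
Definition phi_real (nu : nat) (I : 'I_mu -> {set V}) (S : {set V * 'I_mu})
    (XX : profile) : nat :=
  #|[set v | [forall j : 'I_nu.-1, v \notin Vj XX I j] &&
             ((ncamp XX (seedU I S) v == 0%N) || (nu <= ncamp XX (seedU I S) v)%N)]|.

(* heterogeneous setting: independent outcomes X_i w.r.t. p_i *)
Definition Phi_het (E : rel V) (p : 'I_mu -> V -> V -> R) (nu : nat)
    (I : 'I_mu -> {set V}) (S : {set V * 'I_mu}) : R :=
  \sum_(XX : profile) (\prod_(i < mu) outcome_prob E (p i) (XX i)) * (phi_real nu I S XX)%:R.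

(* correlated setting: all p_i equal to p, and X_1 = ... = X_mu = X *)
Definition corr_profile (X : outcome) : profile := [ffun _ => X].

Definition Phi_corr (E : rel V) (p : V -> V -> R) (nu : nat)
    (I : 'I_mu -> {set V}) (S : {set V * 'I_mu}) : R :=
  \sum_(X : outcome) outcome_prob E p X * (phi_real nu I S (corr_profile X))%:R.

(* Psi (correlated setting); T \subseteq V x {0} identified with its node set *)
Definition Psi (E : rel V) (p : V -> V -> R) (nu : nat)
    (I : 'I_mu -> {set V}) (T : {set V}) : R :=
  \sum_(X : outcome) outcome_prob E p X *
    #|(rho X T :&: \bigcup_(j < nu | (1 <= j)%N) Vj (corr_profile X) I j)
      :|: \bigcup_(j < mu.+1 | (nu <= j)%N) Vj (corr_profile X) I j|%:R.

End Triggering.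

Definition monotone_setfun (R : realFieldType) (T : finType) (f : {set T} -> R) :=
  forall A B : {set T}, A \subset B -> f A <= f B.

Definition submodular_setfun (R : realFieldType) (T : finType) (f : {set T} -> R) :=
  forall (A B : {set T}) (x : T), A \subset B -> x \notin B ->
    f (x |: B) - f B <= f (x |: A) - f A.

(* Main.v *)
Require Import Defs.
From HB Require Import structures.
From mathcomp Require Import all_boot all_order all_algebra.
From mathcomp Require Import zify.
Import Order.TTheory GRing.Theory Num.Theory.
Set Implicit Arguments. Unset Strict Implicit. Unset Printing Implicit Defensive.
Local Open Scope ring_scope.

Definition cov (U W : finType) (P : pred W) (Q : U -> W -> bool) (S : {set U}) : {set W} :=
  [set v | P v || [exists x in S, Q x v]].

Lemma cov_mono (U W : finType) (P : pred W) Q (A B : {set U}) :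
  A \subset B -> cov P Q A \subset cov P Q B.
Proof.
move=> AB; apply/subsetP => v; rewrite !inE => /orP [->//|/existsP [x /andP [xA q]]].
by apply/orP; right; apply/existsP; exists x; rewrite (subsetP AB).
Qed.

Lemma card_covU (U W : finType) (P : pred W) Q (S : {set U}) x :
  #|cov P Q (x |: S)| = (#|cov P Q S| + #|[set v | Q x v] :\: cov P Q S|)%N.
Proof.
rewrite -(cardsID (cov P Q S) (cov P Q (x |: S))); congr (_ + _)%N.
  by rewrite (setIidPr _) //; apply: cov_mono; exact: subsetUr.
apply: eq_card => v; rewrite !in_setD; case vS: (v \in cov P Q S) => //.
rewrite ?andbT /cov !inE; move: vS; rewrite /cov inE => /negbT; rewrite negb_or.
case/andP => /negbTE -> /existsPn ne; rewrite orFb.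
apply/existsP/idP => [[y /andP [] ]|qx]; last by exists x; rewrite !inE eqxx.
rewrite !inE => /orP [/eqP -> //| yS q]; by move: (ne y); rewrite yS q.
Qed.

Section W.
Variables (R : realFieldType) (T U W : finType) (w : T -> R)
  (P : T -> pred W) (Q : T -> U -> W -> bool).
Hypothesis w0 : forall t, 0 <= w t.
Let F (S : {set U}) := \sum_t w t * (#|cov (P t) (Q t) S|)%:R.

Lemma F_mono : monotone_setfun F.
Proof.
move=> A B AB; apply: ler_sum => t _; apply: ler_wpM2l => //.
by rewrite ler_nat; apply: subset_leq_card; apply: cov_mono.
Qed.

Lemma F_sub : submodular_setfun F.
Proof.
move=> A B x AB _; rewrite /F -!sumrB; apply: ler_sum => t _.
rewrite -!mulrBr; apply: ler_wpM2l => //.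
rewrite !card_covU !natrD ![_%:R + _%:R - _]addrAC !subrr !add0r ler_nat; apply: subset_leq_card.
by apply: setDS; apply: cov_mono.
Qed.
End W.
Lemma op_ge0 (R : realFieldType) (V : finType) (E : rel V) (p : V -> V -> R) X :
  (forall u v, E u v -> 0 <= p u v <= 1) -> 0 <= outcome_prob E p X.
Proof.
move=> hp; apply: prodr_ge0 => v _; apply: prodr_ge0 => u _.
case: ifP => [/hp /andP [h0 h1]|_]; case: ifP => _ //; by rewrite ?subr_ge0.
Qed.

Lemma in_rho (V : finType) (X : outcome V) A v :
  (v \in rho X A) = [exists a in A, connect (fun u w => u \in X w) a v].
Proof. by rewrite inE. Qed.

Lemma rhoU (V : finType) (X : outcome V) A B v :
  (v \in rho X (A :|: B)) = (v \in rho X A) || (v \in rho X B).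
Proof.
rewrite !in_rho; apply/existsP/orP => [[a /andP []]|].
  by rewrite inE => /orP [aA c|aB c]; [left|right]; apply/existsP; exists a; rewrite ?aA ?aB.
by case=> /existsP [a /andP [aA c]]; exists a; rewrite inE ?aA ?orbT.
Qed.

Lemma phi_eq (V : finType) (mu nu : nat) (I : 'I_mu -> {set V}) S (XX : profile V mu) :
  (2 <= nu)%N ->
  phi_real nu I S XX = #|cov (fun v => nu <= ncamp XX I v)%N
     (fun x v => (nu.-1 <= ncamp XX I v)%N && (v \notin rho (XX x.2) (I x.2))
                 && connect (fun u w => u \in XX x.2 w) x.1 v) S|.
Proof.
move=> Hnu; apply: eq_card => v; rewrite /cov !inE.
set a := ncamp XX I v; set b := ncamp XX (seedU I S) v.
set ex0 := [exists x in S, (v \notin rho (XX x.2) (I x.2))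
                 && connect (fun u w => u \in XX x.2 w) x.1 v].
have Hf : [forall j : 'I_nu.-1, v \notin Vj XX I j] = (nu.-1 <= a)%N.
  apply/forallP/idP => [h|h j]; last by rewrite inE -/a; apply/eqP => e; move: (ltn_ord j); rewrite -e; lia.
  rewrite leqNgt; apply/negP => lt; move: (h (Ordinal lt)); by rewrite inE -/a eqxx.
have Hsub : [set i | v \in rho (XX i) (I i)] \subset [set i | v \in rho (XX i) (seedU I S i)].
  by apply/subsetP => i; rewrite ![i \in _]inE /seedU rhoU => ->.
have Hle : (a <= b)%N by apply: subset_leq_card.
have Hex : ex0 -> (a < b)%N.
  case/existsP => [[s i] /andP [sS /andP [nI c]]]; apply: proper_card; apply/properP; split => //.
  exists i; rewrite ![i \in _]inE /seedU ?rhoU ?nI ?(negbTE nI) //=.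
  by rewrite in_rho; apply/existsP; exists s; rewrite c andbT; move: sS; rewrite /slice ?inE.
have Hnex : ~~ ex0 -> (b <= a)%N.
  move=> nex; apply: subset_leq_card; apply/subsetP => i; rewrite ![i \in _]inE /seedU rhoU.
  case/orP => // h; apply/negPn/negP => nI; move: nex; rewrite negb_exists_in.
  move: h; rewrite in_rho => /existsP [s /andP [sS c]].
  move: sS; rewrite /slice inE => sS.
  move/forall_inP => /(_ (s, i) sS) /=; by rewrite nI c.
set ex1 := [exists x in S, _].
have -> : ex1 = (nu.-1 <= a)%N && ex0.
  rewrite /ex0 /ex1; case: (nu.-1 <= a)%N => /=; last by apply/negbTE/existsPn => x; rewrite /= ?andbF.
  by apply: eq_existsb => x.
rewrite Hf; case E0: ex0.
  have h := Hex E0; rewrite andbT.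
  case: (leqP nu.-1 a) => h1 /=; last by rewrite ?orbF; apply/esym/negbTE; rewrite -ltnNge; move: h1; clear; move: a => a; case: nu => [|n] /=; lia.
  rewrite orbT; apply/orP; right; move: h h1; clear; move: a b => a b; case: nu => [|n] /=; lia.
have h := Hnex (negbT E0); rewrite andbF orbF.
case: (leqP nu a) => h1.
  by apply/andP; split; [|apply/orP; right]; move: h h1 Hle; clear; move: a b => a b; case: nu => [|n] /=; lia.
apply/negbTE/negP => /andP [h2 /orP [/eqP h3|h3]]; move: h h1 h2 h3 Hle Hnu; clear; move: a b => a b; case: nu => [|n] /=; lia.
Qed.

Lemma psi_eq (V : finType) (X : outcome V) (A B T : {set V}) :
  #|(rho X T :&: A) :|: B| =
  #|cov (fun v => v \in B) (fun a v => (v \in A) && connect (fun u w => u \in X w) a v) T|.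
Proof.
apply: eq_card => v; rewrite /cov [v \in [set _ | _]]inE in_setU in_setI in_rho orbC.
congr (_ || _); apply/andP/existsP => [[/existsP [a /andP [aT c]] vA]|[a /andP [aT /andP [vA c]]]].
  by exists a; rewrite aT vA c.
by split => //; apply/existsP; exists a; rewrite aT c.
Qed.


Theorem mainTheorem15 (R : realFieldType) (V : finType) (E : rel V)
    (mu nu : nat) (Hnu : (2 <= nu)%N) (Hmunu : (nu <= mu)%N)
    (I : 'I_mu -> {set V}) :
  (* correlated setting: Psi, for every p : E -> [0,1] *)
  (forall p : V -> V -> R, (forall u v, E u v -> 0 <= p u v <= 1) ->
     monotone_setfun (Psi E p nu I) /\ submodular_setfun (Psi E p nu I)) /\
  (* correlated setting: Phi^{>= nu-1} *)
  (forall p : V -> V -> R, (forall u v, E u v -> 0 <= p u v <= 1) ->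
     monotone_setfun (Phi_corr E p nu I) /\ submodular_setfun (Phi_corr E p nu I)) /\
  (* heterogeneous setting: Phi^{>= nu-1} *)
  (forall p : 'I_mu -> V -> V -> R, (forall i u v, E u v -> 0 <= p i u v <= 1) ->
     monotone_setfun (Phi_het E p nu I) /\ submodular_setfun (Phi_het E p nu I)).
Proof.
split; [|split].
- move=> p hp.
  have w0 : forall X, 0 <= outcome_prob E p X by move=> X; apply: op_ge0.
  pose P := fun (X : outcome V) v => v \in \bigcup_(j < mu.+1 | (nu <= j)%N) Vj (corr_profile mu X) I j.
  pose Q := fun (X : outcome V) a v => (v \in \bigcup_(j < nu | (1 <= j)%N) Vj (corr_profile mu X) I j)
               && connect (fun u w => u \in X w) a v.
  have e : forall T, Psi E p nu I T =
     \sum_X outcome_prob E p X * #|cov (P X) (Q X) T|%:R.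
    by move=> T; apply: eq_bigr => X _; rewrite psi_eq.
  split => [A B AB | A B x AB xB]; rewrite !e.
    exact: (F_mono P Q w0 AB).
  exact: (F_sub P Q w0 AB xB).
- move=> p hp.
  have w0 : forall X, 0 <= outcome_prob E p X by move=> X; apply: op_ge0.
  pose P := fun (X : outcome V) v => (nu <= ncamp (corr_profile mu X) I v)%N.
  pose Q := fun (X : outcome V) (x : V * 'I_mu) v => (nu.-1 <= ncamp (corr_profile mu X) I v)%N
     && (v \notin rho (corr_profile mu X x.2) (I x.2))
     && connect (fun u w => u \in corr_profile mu X x.2 w) x.1 v.
  have e : forall S, Phi_corr E p nu I S =
     \sum_X outcome_prob E p X * #|cov (P X) (Q X) S|%:R.
    by move=> S; apply: eq_bigr => X _; rewrite phi_eq.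
  split => [A B AB | A B x AB xB]; rewrite !e.
    exact: (F_mono P Q w0 AB).
  exact: (F_sub P Q w0 AB xB).
- move=> p hp.
  have w0 : forall XX : profile V mu, 0 <= \prod_(i < mu) outcome_prob E (p i) (XX i).
    by move=> XX; apply: prodr_ge0 => i _; apply: op_ge0 => u v /hp.
  pose P := fun XX v => (nu <= ncamp XX I v)%N.
  pose Q := fun (XX : profile V mu) (x : V * 'I_mu) v => (nu.-1 <= ncamp XX I v)%N
     && (v \notin rho (XX x.2) (I x.2))
     && connect (fun u w => u \in XX x.2 w) x.1 v.
  have e : forall S, Phi_het E p nu I S =
     \sum_(XX : profile V mu) (\prod_(i < mu) outcome_prob E (p i) (XX i)) * #|cov (P XX) (Q XX) S|%:R.
    by move=> S; apply: eq_bigr => XX _; rewrite phi_eq.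
  split => [A B AB | A B x AB xB]; rewrite !e.
    exact: (F_mono P Q w0 AB).
  exact: (F_sub P Q w0 AB xB).
Qed.
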